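(* Let $M=B\circ S$ where $S$ is Poisson subsampling with rate $r\in[0,1]$ and $B$ is any base mechanism, and let the batch relation be insertion/removal $\simeq_{\pm}$ with induced distance $d_{\mathbb Y}$. Then for all $x\simeq_{K_+,K_-}x'$, $$\Psi_\alpha(m_x\|m_{x'})\le\max_{\mathbf y}\Psi_\alpha\Big(\sum_{i=1}^{K_-+1}b_{y^{(1)}_i}\,\mathrm{Binom}(i-1\mid K_-,r)\ \Big\|\ \sum_{j=1}^{K_++1}b_{y^{(2)}_j}\,\mathrm{Binom}(j-1\mid K_+,r)\Big),$$ where the maximum is over $\mathbf y=(\mathbf y^{(1)},\mathbf y^{(2)})\in\mathbb Y^{K_-+1}\times\mathbb Y^{K_++1}$ subject to $d_{\mathbb Y}(y^{(l)}_t,y^{(l)}_u)\le|t-u|$ for $l\in\{1,2\}$ and all $t,u$, and $d_{\mathbb Y}(y^{(1)}_t,y^{(2)}_u)\le(t-1)+(u-1)$ for all $t,u$.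
   Context: Finite set $\mathbb A$, datasets $x\subseteq\mathbb A$, batches are subsets $y\subseteq x$. Poisson subsampling with rate $r$ has pmf $s_x(y)=r^{|y|}(1-r)^{|x|-|y|}$ for $y\subseteq x$. Base mechanism $B$: each batch $y$ has density $b_y$ on $\mathbb R^D$; $m_x(z)=\sum_y b_y(z)s_x(y)$. Insertion/removal: $y\simeq_\pm y'$ iff $y'=y\cup\{a\}$ for some $a\notin y$ or $y'=y\setminus\{a\}$ for some $a\in y$; $d_{\mathbb Y}$ is the induced distance (length of shortest chain of neighbors). Datasets $x\simeq_{K_+,K_-}x'$ iff $x'=(x\setminus g_-)\cup g_+$ for some $g_-\subseteq x$ with $|g_-|=K_-$ and $g_+$ disjoint from $x$ with $|g_+|=K_+$. $\mathrm{Binom}(k\mid n,r)=\binom nk r^k(1-r)^{n-k}$. $H_\alpha(p\|q)=\int\max\{p-\alpha q,0\}$ ($\alpha\ge0$), $\Lambda_\alpha(p\|q)=\int p^\alpha q^{1-\alpha}$ ($\alpha>1$); $\Psi_\alpha$ is either. *)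

(* Defs.v *)
From HB Require Import structures.
From mathcomp Require Import all_boot all_order all_algebra.
From mathcomp Require Import all_classical all_reals all_analysis.
Set Implicit Arguments. Unset Strict Implicit. Unset Printing Implicit Defensive.
Import Order.TTheory GRing.Theory Num.Theory.
Local Open Scope ring_scope.

Section Combinatorics.
Variable A : finType.

Definition nbr (y y' : {set A}) : bool :=
  [exists a, ((a \notin y) && (y' == a |: y)) || ((a \in y) && (y' == y :\ a))].

(* dY_le y y' k  <->  d_Y(y,y') <= k, where d_Y is the length of a shortest
   chain of neighbours from y to y' (a chain y = c_0 ~ c_1 ~ ... ~ c_n = y'
   of length n is [path nbr y s] with [last y s = y'] and [size s = n]). *)
Definition dY_le (y y' : {set A}) (k : nat) : Prop :=
  exists s : seq {set A}, [/\ path nbr y s, last y s = y' & (size s <= k)%N].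

Definition ds_rel (Kp Km : nat) (x x' : {set A}) : Prop :=
  exists gm gp : {set A},
    [/\ gm \subset x, #|gm| = Km, [disjoint gp & x], #|gp| = Kp
      & x' = (x :\: gm) :|: gp].

Definition distn (m n : nat) : nat := ((m - n) + (n - m))%N.
End Combinatorics.

Section Probabilities.
Variables (R : realType) (A : finType).

Definition poisson_pmf (r : R) (x y : {set A}) : R :=
  if y \subset x then r ^+ #|y| * (1 - r) ^+ (#|x| - #|y|) else 0.

Definition binom_pmf (k n : nat) (r : R) : R :=
  'C(n, k)%:R * r ^+ k * (1 - r) ^+ (n - k).
End Probabilities.

Section Divergences.
Context {d : measure_display} {T : measurableType d} {R : realType}.
Variable mu : {measure set T -> \bar R}.

Definition is_density (p : T -> R) : Prop :=
  [/\ measurable_fun setT p, (forall z, 0 <= p z)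
    & (\int[mu]_z (p z)%:E = 1)%E].

Definition is_base_mechanism (A : finType) (b : {set A} -> T -> R) : Prop :=
  forall y, is_density (b y).

Definition mix (A : finType) (b : {set A} -> T -> R) (r : R) (x : {set A})
  : T -> R :=
  fun z => \sum_(y : {set A}) b y z * poisson_pmf r x y.

Definition hockey (alpha : R) (p q : T -> R) : \bar R :=
  (\int[mu]_z (Num.max (p z - alpha * q z) 0)%:E)%E.

(* integrand a^alpha b^(1-alpha), with the usual conventions
   0 * (0)^(1-alpha) = 0 and a^alpha * 0^(1-alpha) = +oo for a > 0 *)
Definition lam_integrand (alpha a c : R) : \bar R :=
  if c == 0 then (if a == 0 then 0%E else +oo%E)
  else ((a `^ alpha) * (c `^ (1 - alpha)))%:E.

Definition lambda_div (alpha : R) (p q : T -> R) : \bar R :=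
  (\int[mu]_z lam_integrand alpha (p z) (q z))%E.

End Divergences.

Inductive divkind := Hockey | Lambda.

Definition valid_alpha {R : realType} (k : divkind) (alpha : R) : Prop :=
  match k with Hockey => 0 <= alpha | Lambda => 1 < alpha end.

Definition Psi {d : measure_display} {T : measurableType d} {R : realType}
  (mu : {measure set T -> \bar R}) (k : divkind) (alpha : R) (p q : T -> R)
  : \bar R :=
  match k with Hockey => hockey mu alpha p q | Lambda => lambda_div mu alpha p q end.

(* feasible tuples y = (y^(1), y^(2)) in Y^(K-+1) x Y^(K++1), 0-based indices:
   d(y1_t, y1_u) <= |t-u|, d(y2_t, y2_u) <= |t-u|,
   d(y1_t, y2_u) <= (t-1)+(u-1)  (= t + u with 0-based indices) *)
Definition feasible (A : finType) (Km Kp : nat)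
  (yy : ('I_Km.+1 -> {set A}) * ('I_Kp.+1 -> {set A})) : Prop :=
  [/\ forall t u : 'I_Km.+1, dY_le (yy.1 t) (yy.1 u) (distn t u),
      forall t u : 'I_Kp.+1, dY_le (yy.2 t) (yy.2 u) (distn t u)
    & forall (t : 'I_Km.+1) (u : 'I_Kp.+1), dY_le (yy.1 t) (yy.2 u) (t + u)%N].
Arguments feasible {A} Km Kp yy.

(* Main.v *)
Require Import Defs.
From HB Require Import structures.
From mathcomp Require Import all_boot all_order all_algebra.
From mathcomp Require Import all_classical all_reals all_analysis.
From mathcomp Require Import measurable_realfun.
From mathcomp Require Import ring lra.
Import Order.TTheory GRing.Theory Num.Theory.
Local Open Scope classical_set_scope.
Local Open Scope ring_scope.

Section Real.
Variable R : realType.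

Lemma powR_invx (al y : R) : 0 <= y -> (y^-1) `^ al = (y `^ al)^-1.
Proof. by move=> y0; rewrite -powR_inv1 // -powRrM mulN1r powRN. Qed.

Lemma persp_eq (al x y : R) : 0 <= x -> 0 < y ->
  x `^ al * y `^ (1 - al) = y * (x / y) `^ al.
Proof.
move=> x0 y0.
rewrite (powRM _ x0) ?invr_ge0 ?(ltW y0) // powR_invx ?(ltW y0) //.
rewrite powRD; last by apply/implyP => _; rewrite gt_eqF.
rewrite powRr1 ?ltW // powRN; by rewrite mulrCA mulrA.
Qed.

Lemma persp_ineq (al a a' c c' : R) : 1 < al -> 0 <= a -> 0 <= a' -> 0 < c -> 0 < c' ->
  (a + a') `^ al * (c + c') `^ (1 - al) <= a `^ al * c `^ (1 - al) + a' `^ al * c' `^ (1 - al).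
Proof.
move=> al1 a0 a'0 c0 c'0.
have cc0 : 0 < c + c' by rewrite addr_gt0.
rewrite !persp_eq ?addr_ge0 //.
set t := c / (c + c').
have t0 : 0 <= t by rewrite divr_ge0 ?ltW.
have t1 : t <= 1 by rewrite ler_pdivrMr // mul1r lerDl ltW.
have := @convex_powR R al (ltW al1) (Itv01 t0 t1) (a / c) (a' / c').
move=> H.
have {H} : (t * (a / c) + (1 - t) * (a' / c')) `^ al <= t * (a / c) `^ al + (1 - t) * (a' / c') `^ al.
  have Hu : a / c \in `[0, +oo[%classic.
    by rewrite in_setE /= in_itv /= andbT; exact: divr_ge0 a0 (ltW c0).
  have Hv : a' / c' \in `[0, +oo[%classic.
    by rewrite in_setE /= in_itv /= andbT; exact: divr_ge0 a'0 (ltW c'0).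
  move: (H Hu Hv). rewrite !convRE /=. done.
have -> : t * (a / c) + (1 - t) * (a' / c') = (a + a') / (c + c').
  rewrite /t; field; by rewrite !gt_eqF.
have -> : 1 - t = c' / (c + c') by rewrite /t; field; rewrite gt_eqF.
move=> H.
have := ler_wpM2l (ltW cc0) H.
suff -> : (c + c') * (c / (c + c') * (a / c) `^ al + c' / (c + c') * (a' / c') `^ al) =
  c * (a / c) `^ al + c' * (a' / c') `^ al by [].
by field; rewrite gt_eqF.
Qed.

Definition Fint (k : divkind) (al a c : R) : \bar R :=
  match k with Hockey => (Num.max (a - al * c) 0)%:E | Lambda => lam_integrand al a c end.

Lemma Fge0 k al a c : (0 <= Fint k al a c)%E.
Proof.
case: k => /=; first by rewrite lee_fin le_max lexx orbT.
rewrite /lam_integrand; case: (c == 0); first by case: (a == 0).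
by rewrite lee_fin mulr_ge0 // powR_ge0.
Qed.

Lemma F00 k al : Fint k al 0 0 = 0%E.
Proof. by case: k => /=; rewrite ?mulr0 ?subrr ?maxxx // /lam_integrand eqxx. Qed.

Lemma Fhom k (al w a c : R) : valid_alpha k al -> 0 <= w -> 0 <= a -> 0 <= c ->
  (Fint k al (w * a) (w * c) <= w%:E * Fint k al a c)%E.
Proof.
move=> hal w0 a0 c0; case: k hal => /= hal.
  rewrite -EFinM lee_fin ge_max mulr_ge0 ?le_max ?lexx ?orbT // andbT.
  have -> : w * a - al * (w * c) = w * (a - al * c) by ring.
  by rewrite ler_wpM2l // le_max lexx.
have [->|wn0] := eqVneq w 0.
  by rewrite !mul0r /lam_integrand eqxx mul0e.
have wp : 0 < w by rewrite lt0r wn0.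
rewrite /lam_integrand !mulf_eq0 (negbTE wn0) /=.
case: eqP => [_|cn0].
  case: eqP => _; [by rewrite mule0 | by rewrite gt0_muley ?lte_fin].
rewrite -EFinM lee_fin (powRM _ (ltW wp) a0) (powRM _ (ltW wp) c0).
have -> : w `^ al * a `^ al * (w `^ (1 - al) * c `^ (1 - al)) =
  (w `^ al * w `^ (1 - al)) * (a `^ al * c `^ (1 - al)) by ring.
rewrite -powRD; last by apply/implyP => _.
by rewrite addrC subrK powRr1 ?(ltW wp).
Qed.

Lemma Fsub k (al a a' c c' : R) : valid_alpha k al -> 0 <= a -> 0 <= a' -> 0 <= c -> 0 <= c' ->
  (Fint k al (a + a') (c + c') <= Fint k al a c + Fint k al a' c')%E.
Proof.
move=> hal a0 a'0 c0 c'0; case: k hal => /= hal.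
  rewrite -EFinD lee_fin ge_max addr_ge0 ?le_max ?lexx ?orbT // andbT.
  have -> : a + a' - al * (c + c') = (a - al * c) + (a' - al * c') by ring.
  by rewrite lerD // le_max lexx.
have Lge0 : forall x y : R, (0 <= lam_integrand al x y)%E by move=> x y; exact: (Fge0 Lambda al x y).
rewrite /lam_integrand.
have [cc0|ccn0] := eqVneq (c + c') 0.
  move/eqP: (cc0); rewrite (paddr_eq0 c0 c'0) => /andP [/eqP c00 /eqP c'00].
  rewrite c00 c'00 eqxx.
  have [->|an0] := eqVneq a 0; have [->|a'n0] := eqVneq a' 0;
    rewrite ?addr0 ?add0r ?eqxx ?(negbTE an0) ?(negbTE a'n0) ?adde0 ?add0e ?leey //.
have [c00|cn0] := eqVneq c 0.
  rewrite c00 add0r in ccn0 *.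
  have [a00|an0] := eqVneq a 0.
    by rewrite a00 add0r add0e ?(negbTE ccn0).
  rewrite addye ?leey //.
  by rewrite -ltNye (lt_le_trans _ (Lge0 a' c')).
have [c'00|c'n0] := eqVneq c' 0.
  rewrite c'00 addr0 in ccn0 *.
  have [a'00|a'n0] := eqVneq a' 0.
    by rewrite a'00 addr0 adde0 ?(negbTE cn0).
  rewrite addey ?leey //.
rewrite -EFinD lee_fin.
apply: persp_ineq => //; by rewrite lt0r ?cn0 ?c'n0.
Qed.

End Real.
Arguments Fint {R}.

Section Meas.
Context {d : measure_display} {T : measurableType d} {R : realType}.
Variable mu : {measure set T -> \bar R}.

Lemma Psi_Fint k al (p q : T -> R) :
  Psi mu k al p q = (\int[mu]_z Fint k al (p z) (q z))%E.
Proof. by case: k. Qed.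

Lemma Fmeas k (al : R) (p q : T -> R) : measurable_fun setT p -> measurable_fun setT q ->
  measurable_fun setT (fun z => Fint k al (p z) (q z)).
Proof.
move=> mp mq; case: k => /=.
  apply/measurable_EFinP => /=.
  apply: (@measurable_maxr _ _ _ _ (fun z => p z - al * q z) (cst 0)) => //.
  apply: measurable_funB => //; apply: measurable_funM => //.
rewrite /lam_integrand.
apply: measurable_fun_ifT.
- exact: measurable_fun_eqr.
- apply: measurable_fun_ifT => //; exact: measurable_fun_eqr.
- apply/measurable_EFinP => /=; apply: measurable_funM.
  + exact: (measurableT_comp (measurable_powR _) mp).
  + exact: (measurableT_comp (measurable_powR _) mq).
Qed.

Lemma Fconv k (al : R) (I : Type) (s : seq I) (D : pred I) (w a c : I -> R) :
  valid_alpha k al -> (forall i, D i -> 0 <= w i) ->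
  (forall i, D i -> 0 <= a i) -> (forall i, D i -> 0 <= c i) ->
  (Fint k al (\sum_(i <- s | D i) w i * a i) (\sum_(i <- s | D i) w i * c i)
   <= \sum_(i <- s | D i) (w i)%:E * Fint k al (a i) (c i))%E.
Proof.
move=> hal w0 a0 c0; elim: s => [|i s IH]; first by rewrite !big_nil F00.
rewrite !big_cons; case: ifP => // Di.
apply: le_trans; first apply: Fsub => //.
- by rewrite mulr_ge0 // ?w0 ?a0 ?c0.
- by apply: sumr_ge0 => j Dj; rewrite mulr_ge0 ?w0 ?a0.
- by rewrite mulr_ge0 // ?w0 ?a0 ?c0.
- by apply: sumr_ge0 => j Dj; rewrite mulr_ge0 ?w0 ?c0.
by apply: leeD => //; apply: Fhom => //; [exact: w0|exact: a0|exact: c0].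
Qed.


Variables (k : divkind) (al : R) (V : \bar R).
Hypothesis hal : valid_alpha k al.

Definition good (p q : T -> R) :=
  [/\ measurable_fun setT p, measurable_fun setT q, (forall z, 0 <= p z),
      (forall z, 0 <= q z) & (Psi mu k al p q <= V)%E].

Lemma meas_wsum (I : finType) (D : pred I) (w : I -> R) (f : I -> T -> R) :
  (forall i, D i -> measurable_fun setT (f i)) ->
  measurable_fun setT (fun z => \sum_(i | D i) w i * f i z).
Proof.
move=> mf.
rewrite (_ : (fun z => _) = (fun z => \sum_(i <- index_enum I) (if D i then w i * f i z else 0))); last first.
  by apply/funext => z; rewrite big_mkcond.
apply: measurable_sum => i; case: (D i) (mf i) => mfi; last exact: measurable_cst.
by apply: measurable_funM; [exact: measurable_cst | exact: mfi].
Qed.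

Lemma good_conv (I : finType) (D : pred I) (w : I -> R) (f g : I -> T -> R) :
  (forall i, D i -> 0 <= w i) -> \sum_(i | D i) w i = 1 ->
  (forall i, D i -> good (f i) (g i)) ->
  good (fun z => \sum_(i | D i) w i * f i z) (fun z => \sum_(i | D i) w i * g i z).
Proof.
move=> w0 w1 hg.
have mf : forall i, D i -> measurable_fun setT (f i) by move=> i /hg [].
have mg : forall i, D i -> measurable_fun setT (g i) by move=> i /hg [].
have f0 : forall i, D i -> forall z, 0 <= f i z by move=> i /hg [].
have g0 : forall i, D i -> forall z, 0 <= g i z by move=> i /hg [].
split.
- exact: meas_wsum.
- exact: meas_wsum.
- by move=> z; apply: sumr_ge0 => i Di; rewrite mulr_ge0 ?w0 ?f0.
- by move=> z; apply: sumr_ge0 => i Di; rewrite mulr_ge0 ?w0 ?g0.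
rewrite Psi_Fint.
pose h i z := if D i then ((w i)%:E * Fint k al (f i z) (g i z))%E else 0%E.
have mh : forall i, measurable_fun setT (h i).
  move=> i; rewrite /h; case: (D i) (mf i) (mg i) => mfi mgi; last exact: measurable_cst.
  apply: measurable_funeM; apply: Fmeas; [exact: mfi | exact: mgi].
have h0 : forall i z, (0 <= h i z)%E.
  by move=> i z; rewrite /h; case: ifP => // Di; rewrite mule_ge0 ?lee_fin ?w0 ?Fge0.
apply: (@le_trans _ _ (\int[mu]_z (\sum_(i <- index_enum I) h i z))%E).
  apply: ge0_le_integral => //.
  - by move=> z _; exact: Fge0.
  - by apply: Fmeas; exact: meas_wsum.
  - exact: emeasurable_sum.
  move=> z _; rewrite -big_mkcond /=.
  apply: Fconv => // i Di; [exact: f0|exact: g0].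
rewrite (@ge0_integral_sum _ _ _ mu setT measurableT _ h mh (fun i z _ => h0 i z)).
apply: (@le_trans _ _ (\sum_(i <- index_enum I) (if D i then (w i)%:E * V else 0))%E).
  apply: lee_sum => i _; rewrite /h; case: (boolP (D i)) => Di; last by rewrite integral0.
  rewrite ge0_integralZl //; last by rewrite lee_fin w0.
  - rewrite lee_wpmul2l ?lee_fin ?w0 //.
    by have [_ _ _ _] := hg i Di; rewrite Psi_Fint.
  - by apply: Fmeas; [exact: mf | exact: mg].
  - by move=> z _; exact: Fge0.
rewrite -big_mkcond /= -ge0_sume_distrl; last by move=> i Di; rewrite lee_fin w0.
by rewrite sumEFin w1 mul1e.
Qed.

End Meas.

Section Comb.
Variable A : finType.
Implicit Types y : {set A}.

Definition st y y' := (y == y') || nbr y y'.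

Lemma dY_mono {y y' k} k' : dY_le y y' k -> (k <= k')%N -> dY_le y y' k'.
Proof. by case=> s [p l sz] kk; exists s; split => //; apply: leq_trans kk. Qed.

Lemma dY_refl y k : dY_le y y k.
Proof. by exists [::]. Qed.

Lemma dY_trans {y1 y2 y3 k1 k2} : dY_le y1 y2 k1 -> dY_le y2 y3 k2 -> dY_le y1 y3 (k1 + k2).
Proof.
case=> s1 [p1 l1 z1] [s2 [p2 l2 z2]]; exists (s1 ++ s2); split.
- by rewrite cat_path p1 l1 p2.
- by rewrite last_cat l1.
- by rewrite size_cat leq_add.
Qed.

Lemma nbr_sym {y y'} : nbr y y' -> nbr y' y.
Proof.
case/existsP => a /orP [/andP [an /eqP ->]|/andP [ai /eqP ->]]; apply/existsP; exists a.
  by rewrite finset.setU11 /= finset.setU1K.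
by rewrite finset.setD11 /= (finset.setD1K ai) eqxx.
Qed.

Lemma dY_nbr {y y'} : nbr y y' -> dY_le y y' 1.
Proof. by move=> h; exists [:: y']; rewrite /= h. Qed.

Lemma dY_st {y y'} : st y y' -> dY_le y y' 1.
Proof. by case/orP => [/eqP ->|]; [exact: dY_refl|exact: dY_nbr]. Qed.

Lemma dY_sym {y y' k} : dY_le y y' k -> dY_le y' y k.
Proof.
case=> s [p l z]; elim: s y p l k z => [|y1 s IH] y /= p l k z.
  by rewrite -l; exact: dY_refl.
case/andP: p => n p.
have H := dY_trans (IH y1 p l (size s) (leqnn _)) (dY_nbr (nbr_sym n)).
by apply: (dY_mono _ H); rewrite addn1.
Qed.

Lemma chain_dY {Y s} : path st Y s -> forall i j, (i <= j)%N -> (j <= size s)%N ->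
  dY_le (nth finset.set0 (Y :: s) i) (nth finset.set0 (Y :: s) j) (j - i)%N.
Proof.
elim: s Y => [|y1 s IH] Y /=.
  by move=> _ i j ij; rewrite leqn0 => /eqP j0; move: ij; rewrite j0 leqn0 => /eqP ->; exact: dY_refl.
case/andP => sY p [|i] [|j] //= ij jl.
- exact: dY_refl.
- have := dY_trans (dY_st sY) (IH _ p 0 j (leq0n _) jl).
  by rewrite !subn0 add1n.
- by rewrite subSS; apply: IH.
Qed.

Lemma feas_chains Km Kp Y s1 s2 :
  path st Y s1 -> size s1 = Km -> path st Y s2 -> size s2 = Kp ->
  feasible Km Kp ((fun t : 'I_Km.+1 => nth finset.set0 (Y :: s1) t),
                  (fun u : 'I_Kp.+1 => nth finset.set0 (Y :: s2) u)).
Proof.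
move=> p1 z1 p2 z2.
have gen : forall s K, path st Y s -> size s = K -> forall t u : 'I_K.+1,
    dY_le (nth finset.set0 (Y :: s) t) (nth finset.set0 (Y :: s) u) (distn t u).
  move=> s K p z t u; have tl : (t <= size s)%N by rewrite z -ltnS.
  have ul : (u <= size s)%N by rewrite z -ltnS.
  rewrite /distn; case: (leqP t u) => tu.
    have -> : (t - u = 0)%N by apply/eqP; rewrite subn_eq0.
    by rewrite add0n; apply: chain_dY.
  have -> : (u - t = 0)%N by apply/eqP; rewrite subn_eq0 ltnW.
  by rewrite addn0; apply: dY_sym; apply: chain_dY => //; rewrite ltnW.
split => /=.
- exact: gen.
- exact: gen.
move=> t u.
have h1 : dY_le (nth finset.set0 (Y :: s1) t) Y t.
  apply: dY_sym; have := chain_dY p1 0 t (leq0n t); rewrite subn0; apply.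
  by rewrite z1 -ltnS.
have h2 : dY_le Y (nth finset.set0 (Y :: s2) u) u.
  have := chain_dY p2 0 u (leq0n u); rewrite subn0; apply.
  by rewrite z2 -ltnS.
exact: dY_trans h1 h2.
Qed.

End Comb.
Arguments st {A}.

Section Sums.
Variables (A : finType) (R : realType) (T : Type) (b : {set A} -> T -> R).

Lemma sum_reidx (a : A) (G : {set A}) (F : {set A} -> R) : a \in G ->
  \sum_(S : {set A} | S \subset G :\ a) F (a |: S) = \sum_(S : {set A} | (S \subset G) && (a \in S)) F S.
Proof.
move=> aG.
rewrite [RHS](reindex_onto (fun S => a |: S) (fun S => S :\ a)) /=; last first.
  by move=> S /andP [_ aS]; rewrite finset.setD1K.
apply: eq_bigl => S.
rewrite finset.setU11 andbT finset.subUset finset.sub1set aG /= finset.subsetD1.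
case: (boolP (a \in S)) => aS /=.
  have -> : a |: S = S by apply/finset.setUidPr; rewrite finset.sub1set.
  suff -> : (S :\ a == S) = false by [].
  apply/negbTE/eqP => e.
  by move: (finset.setD11 a S); rewrite e aS.
by rewrite finset.setU1K // eqxx.
Qed.

Definition Tg (g : nat -> R) (Y G : {set A}) (z : T) : R :=
  \sum_(S : {set A} | S \subset G) g #|S| * b (Y :|: S) z.

Definition Mg (g : nat -> R) (K : nat) (l : seq {set A}) (z : T) : R :=
  \sum_(i < K.+1) ('C(K, i)%:R * g i) * b (nth finset.set0 l i) z.

Definition convcl (P : (T -> R) -> Prop) :=
  forall (I : finType) (D : pred I) (w : I -> R) (f : I -> T -> R),
  (forall i, D i -> 0 <= w i) -> \sum_(i | D i) w i = 1 -> (forall i, D i -> P (f i)) ->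
  P (fun z => \sum_(i | D i) w i * f i z).


Definition Tp (r : R) (Y G : {set A}) := Tg (fun i => r ^+ i * (1 - r) ^+ (#|G| - i)) Y G.

Lemma Tp_peel r (a : A) (Y G : {set A}) (z : T) : a \in G ->
  Tp r Y G z = (1 - r) * Tp r Y (G :\ a) z + r * Tp r (a |: Y) (G :\ a) z.
Proof.
move=> aG; rewrite /Tp /Tg [LHS](bigID (fun S : {set A} => a \in S)) /= addrC.
rewrite -(sum_reidx a G (fun S => r ^+ #|S| * (1 - r) ^+ (#|G| - #|S|) * b (Y :|: S) z) aG).
have cG : #|G| = (#|G :\ a|).+1 by rewrite (cardsD1 a G) aG.
rewrite !mulr_sumr; congr (_ + _).
  rewrite [LHS](eq_bigl (fun S : {set A} => S \subset G :\ a)); last first.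
    by move=> S; rewrite finset.subsetD1.
  apply: eq_bigr => S; rewrite finset.subsetD1 => /andP [SG aS].
  have SG' : (#|S| <= #|G :\ a|)%N.
    by apply: subset_leq_card; rewrite finset.subsetD1 SG aS.
  rewrite cG subSn // exprS; ring.
apply: eq_bigr => S SGa.
have aS : a \notin S by move: SGa; rewrite finset.subsetD1 => /andP [].
have SG' : (#|S| <= #|G :\ a|)%N by apply: subset_leq_card.
rewrite cardsU1 aS add1n cG subSS exprS.
have -> : Y :|: (a |: S) = (a |: Y) :|: S by rewrite finset.setUCA finset.setUA.
ring.
Qed.


Lemma st_addY (a : A) (Y : {set A}) : st Y (a |: Y).
Proof.
case: (boolP (a \in Y)) => aY.
  have -> : a |: Y = Y by apply/finset.setUidPr; rewrite finset.sub1set.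
  by rewrite /st eqxx.
by apply/orP; right; apply/existsP; exists a; rewrite aY eqxx.
Qed.

Lemma binS_R (K j : nat) :
  ('C(K.+1, j.+1))%:R = ('C(K, j))%:R * (K.+1)%:R / (j.+1)%:R :> R.
Proof.
have e := mul_bin_diag K.+1 j; move/(congr1 (fun n => n%:R : R)): e; rewrite !natrM /= => e.
have jn0 : (j.+1)%:R != 0 :> R by rewrite pnatr_eq0.
apply: (mulfI jn0); rewrite -e; field; by rewrite addrC natr1 pnatr_eq0.
Qed.

Lemma chainL (P : (T -> R) -> Prop) : convcl P -> forall K (Y G : {set A}) (g : nat -> R) (h : T -> R),
  #|G| = K ->
  (forall s, path st Y s -> size s = K -> P (fun z => h z + Mg g K (Y :: s) z)) ->
  P (fun z => h z + Tg g Y G z).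
Proof.
move=> Pc K; elim: K => [|K IH] Y G g h cG H.
  have G0 : G = finset.set0 by apply/eqP; rewrite -cards_eq0 cG.
  suff -> : (fun z => h z + Tg g Y G z) = (fun z => h z + Mg g 0 [:: Y] z) by apply: H.
  apply/funext => z; congr (_ + _); rewrite /Tg /Mg big_ord1 G0.
  rewrite (big_pred1 finset.set0) ?finset.setU0 ?cards0 ?bin0 ?mul1r //.
  by move=> S; rewrite finset.subset0.
have Kn0 : (K.+1)%:R != 0 :> R by rewrite pnatr_eq0.
pose c := ((K.+1)%:R : R)^-1.
pose g' j := g j.+1 * (K.+1)%:R / (j.+1)%:R.
pose f a := fun z => (h z + g 0 * b Y z) + Tg g' (a |: Y) (G :\ a) z.
have Pf : forall a, a \in G -> P (f a).
  move=> a aG; apply: IH.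
    by move: cG; rewrite (cardsD1 a G) aG add1n => -[].
  move=> s ps zs.
  suff <- : (fun z => h z + Mg g K.+1 (Y :: (a |: Y) :: s) z) =
            (fun z => (h z + g 0 * b Y z) + Mg g' K ((a |: Y) :: s) z).
    by apply: H; rewrite /= ?zs // st_addY ps.
  apply/funext => z; rewrite /Mg big_ord_recl /= bin0 mul1r -addrA; congr (_ + (_ + _)).
  apply: eq_bigr => j _; rewrite /bump leq0n add1n add0n binS_R /g'; congr (_ * _); field.
  by rewrite addrC natr1 pnatr_eq0.
suff E : (fun z => \sum_(a | a \in G) c * f a z) = (fun z => h z + Tg g Y G z).
  rewrite -E; apply: (Pc _ (fun a => a \in G) (fun _ => c) f) => //.
  + by move=> a _; rewrite /c invr_ge0 ler0n.
  + rewrite sumr_const cG /c; have -> : forall x : R, x *+ K.+1 = x * (K.+1)%:R by move=> x; rewrite mulr_natr.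
    by rewrite mulVf.
apply/funext => z.
  pose Fz (S : {set A}) := g' (#|S|.-1) * b (Y :|: S) z.
  have e1 : forall a, a \in G -> Tg g' (a |: Y) (G :\ a) z =
      \sum_(S : {set A} | S \subset G) (if a \in S then Fz S else 0).
    move=> a aG; rewrite -big_mkcondr -(sum_reidx a G Fz aG) /Tg.
    apply: eq_bigr => S; rewrite finset.subsetD1 => /andP [_ aS].
    by rewrite /Fz cardsU1 aS add1n /= finset.setUCA finset.setUA.
  have e2 : \sum_(a | a \in G) c * f a z =
      c * ((h z + g 0 * b Y z) *+ #|G|) + c * \sum_(S : {set A} | S \subset G) Fz S *+ #|S|.
    rewrite -mulr_sumr -mulrDr; congr (_ * _).
    rewrite /f big_split /= sumr_const; congr (_ + _).
    rewrite (eq_bigr (fun a => \sum_(S : {set A} | S \subset G) (if a \in S then Fz S else 0))); last first.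
      by move=> a aG; rewrite e1.
    rewrite exchange_big /=; apply: eq_bigr => S SG.
    rewrite -big_mkcondr /= (eq_bigl (fun a => a \in S)) ?sumr_const //.
    by move=> a; case: (boolP (a \in S)) => aS; rewrite ?andbT ?andbF // (fintype.subsetP SG).
  rewrite e2 /Tg.
  have e3 : forall S : {set A}, S \subset G -> g #|S| * b (Y :|: S) z =
      c * (Fz S *+ #|S|) + (if S == finset.set0 then g 0 * b Y z else 0).
    move=> S SG; case: eqP => [->|/eqP Sn0].
      by rewrite cards0 mulr0n mulr0 add0r finset.setU0.
    have : (0 < #|S|)%N by rewrite card_gt0.
    case E : #|S| => [//|n] _.
    rewrite addr0 /Fz E /= /g' -mulr_natr /c; field.
    by rewrite !(addrC 1) !natr1 !pnatr_eq0.
  have e4 : \sum_(S : {set A} | S \subset G) (if S == finset.set0 then g 0 * b Y z else 0) = g 0 * b Y z.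
    rewrite (bigD1 finset.set0) ?finset.sub0set //= eqxx big1 ?addr0 //.
    by move=> S /andP [_ /negbTE ->].
  rewrite (eq_bigr _ e3) big_split /= -mulr_sumr e4.
  rewrite cG -mulr_natr /c; field; rewrite ?(addrC 1) ?natr1 ?pnatr_eq0 //.
Qed.

End Sums.
Arguments convcl {R T}.
Arguments Tg {A R T}.
Arguments Mg {A R T}.
Arguments Tp {A R T}.
Arguments Tp_peel {A R T}.
Arguments chainL {A R T}.

Local Close Scope classical_set_scope.
Section Main.
Context {d : measure_display} {T : measurableType d} {R : realType}.
Variables (mu : {measure set T -> \bar R}) (A : finType) (b : {set A} -> T -> R).
Variables (r : R) (k : divkind) (al : R) (Kp Km : nat) (V : \bar R).
Hypotheses (hb : is_base_mechanism mu b) (hr : 0 <= r <= 1) (hal : valid_alpha k al).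
Hypothesis hV : forall yy, feasible Km Kp yy ->
  (Psi mu k al
        (fun z => (\sum_(i < Km.+1) b (yy.1 i) z * binom_pmf i Km r)%R)
        (fun z => (\sum_(j < Kp.+1) b (yy.2 j) z * binom_pmf j Kp r)%R) <= V)%E.

Let goodp := good mu k al V.

Lemma conv_left q : convcl (fun p => goodp p q).
Proof.
move=> I D w f w0 w1 Pf.
have := @good_conv _ _ _ mu k al V hal I D w f (fun _ => q) w0 w1 Pf.
suff -> : (fun z => \sum_(i | D i) w i * q z) = q by [].
by apply/funext => z; rewrite -mulr_suml w1 mul1r.
Qed.

Lemma conv_right p : convcl (fun q => goodp p q).
Proof.
move=> I D w g w0 w1 Pg.
have := @good_conv _ _ _ mu k al V hal I D w (fun _ => p) g w0 w1 Pg.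
suff -> : (fun z => \sum_(i | D i) w i * p z) = p by [].
by apply/funext => z; rewrite -mulr_suml w1 mul1r.
Qed.

Let r0 : 0 <= r. Proof. by case/andP: hr. Qed.
Let r1 : 0 <= 1 - r. Proof. by case/andP: hr => _; rewrite subr_ge0. Qed.

Lemma Mg_good K (l : seq {set A}) :
  let p := fun z => 0 + Mg b (fun i => r ^+ i * (1 - r) ^+ (K - i)) K l z in
  [/\ measurable_fun setT p, (forall z, 0 <= p z) &
   p = (fun z => \sum_(i < K.+1) b (nth finset.set0 l i) z * binom_pmf i K r)].
Proof.
have bm : forall y, measurable_fun setT (b y) by move=> y; case: (hb y).
have b0 : forall y z, 0 <= b y z by move=> y z; case: (hb y) => _ h _; exact: h.
move=> p; split.
- rewrite /p /Mg; apply: measurable_funD; first exact: measurable_cst.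
  apply: measurable_sum => i; apply: measurable_funM; first exact: measurable_cst.
  exact: bm.
- move=> z; rewrite /p /Mg add0r; apply: sumr_ge0 => i _.
  by rewrite !mulr_ge0 ?exprn_ge0 ?ler0n.
- apply/funext => z; rewrite /p /Mg add0r; apply: eq_bigr => i _.
  rewrite /binom_pmf; ring.
Qed.

Lemma cand_good Y s1 s2 : path st Y s1 -> size s1 = Km -> path st Y s2 -> size s2 = Kp ->
  goodp (fun z => 0 + Mg b (fun i => r ^+ i * (1 - r) ^+ (Km - i)) Km (Y :: s1) z)
        (fun z => 0 + Mg b (fun i => r ^+ i * (1 - r) ^+ (Kp - i)) Kp (Y :: s2) z).
Proof.
move=> p1 z1 p2 z2.
have [m1 n1 e1] := Mg_good Km (Y :: s1).
have [m2 n2 e2] := Mg_good Kp (Y :: s2).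
split => //.
rewrite e1 e2.
exact: (hV _ (@feas_chains _ _ _ _ _ _ p1 z1 p2 z2)).
Qed.

Lemma base_good (Y gm gp : {set A}) : #|gm| = Km -> #|gp| = Kp -> goodp (Tp b r Y gm) (Tp b r Y gp).
Proof.
move=> cgm cgp.
have -> : Tp b r Y gm = (fun z => 0 + Tg b (fun i => r ^+ i * (1 - r) ^+ (Km - i)) Y gm z).
  by apply/funext => z; rewrite add0r /Tp cgm.
apply: (chainL b _ (conv_left _) _ _ _ _ (fun _ => 0) cgm) => s1 p1 z1.
have -> : Tp b r Y gp = (fun z => 0 + Tg b (fun i => r ^+ i * (1 - r) ^+ (Kp - i)) Y gp z).
  by apply/funext => z; rewrite add0r /Tp cgp.
apply: (chainL b _ (conv_right _) _ _ _ _ (fun _ => 0) cgp) => s2 p2 z2.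
exact: cand_good.
Qed.

Lemma peel_good (gm gp : {set A}) : #|gm| = Km -> #|gp| = Kp -> forall n (c Y : {set A}), #|c| = n ->
  [disjoint c & gm] -> [disjoint c & gp] ->
  goodp (Tp b r Y (c :|: gm)) (Tp b r Y (c :|: gp)).
Proof.
move=> cgm cgp n; elim: n => [|n IH] c Y cc dm dp.
  have -> : c = finset.set0 by apply/eqP; rewrite -cards_eq0 cc.
  by rewrite !finset.set0U; exact: base_good.
have : (0 < #|c|)%N by rewrite cc.
rewrite card_gt0 => /finset.set0Pn [a ac].
have cc' : #|c :\ a| = n by move: cc; rewrite (cardsD1 a c) ac add1n => -[].
have sub : c :\ a \subset c by apply: finset.subD1set.
have dm' := disjointWl sub dm.
have dp' := disjointWl sub dp.
have e : forall G : {set A}, [disjoint c & G] -> (c :|: G) :\ a = (c :\ a) :|: G.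
  move=> G dG; apply/finset.setP => x; rewrite !finset.inE.
  case: (eqVneq x a) => [->|] //=; by rewrite (disjointFr dG ac).
have aG : forall G : {set A}, a \in c :|: G by move=> G; rewrite finset.inE ac.
pose w (i : bool) := if i then r else 1 - r.
pose f (G : {set A}) (i : bool) := if i then Tp b r (a |: Y) ((c :\ a) :|: G) else Tp b r Y ((c :\ a) :|: G).
have := @good_conv _ _ _ mu k al V hal bool xpredT w (f gm) (f gp).
have E : forall G : {set A}, [disjoint c & G] ->
    Tp b r Y (c :|: G) = (fun z => \sum_(i | xpredT i) w i * f G i z).
  move=> G dG; apply/funext => z; rewrite big_bool /= (Tp_peel b r a Y _ z (aG G)) (e G dG).
  by rewrite addrC.
rewrite -(E _ dm) -(E _ dp); apply.
- by move=> [] _; rewrite /w.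
- by rewrite big_bool /w /= addrC subrK.
- by move=> [] _; rewrite /f; apply: IH.
Qed.

End Main.
Local Open Scope classical_set_scope.

Theorem theorem3p7 (d : measure_display) (T : measurableType d) (R : realType)
  (mu : {measure set T -> \bar R}) (A : finType) (b : {set A} -> T -> R)
  (r : R) (k : divkind) (alpha : R) (Kp Km : nat) (x x' : {set A}) :
  is_base_mechanism mu b ->
  0 <= r <= 1 ->
  valid_alpha k alpha ->
  ds_rel Kp Km x x' ->
  (Psi mu k alpha (mix b r x) (mix b r x') <=
   ereal_sup
     [set Psi mu k alpha
        (fun z => (\sum_(i < Km.+1) b (yy.1 i) z * binom_pmf i Km r)%R)
        (fun z => (\sum_(j < Kp.+1) b (yy.2 j) z * binom_pmf j Kp r)%R)
     | yy in feasible Km Kp])%E.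
Proof.
move=> hb hr hal [gm [gp [gmx cgm gpd cgp ->]]].
set V := ereal_sup _.
have hV : forall yy, feasible Km Kp yy ->
  (Psi mu k alpha
        (fun z => (\sum_(i < Km.+1) b (yy.1 i) z * binom_pmf i Km r)%R)
        (fun z => (\sum_(j < Kp.+1) b (yy.2 j) z * binom_pmf j Kp r)%R) <= V)%E.
  by move=> yy fy; apply: ereal_sup_ubound; exists yy.
have mixE : forall y, mix b r y = Tp b r finset.set0 y.
  move=> y; apply/funext => z; rewrite /mix /Tp /Tg [RHS]big_mkcond /=.
  apply: eq_bigr => S _; rewrite /Defs.poisson_pmf; case: ifP => _; last by rewrite mulr0.
  by rewrite finset.set0U mulrC.
set c := x :\: gm.
have ex : x = c :|: gm.
  apply/finset.setP => a; rewrite /c !finset.inE.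
  by case: (boolP (a \in gm)) => am; rewrite ?orbT ?orbF ?andbT // (fintype.subsetP gmx).
have dm : [disjoint c & gm]%bool.
  rewrite finset.disjoints_subset; apply/fintype.subsetP => a.
  by rewrite /c !finset.inE => /andP [].
have dp : [disjoint c & gp]%bool.
  rewrite disjoint_sym; apply: disjointWr gpd; exact: finset.subsetDl.
have := @peel_good d T R mu A b r k alpha Kp Km V hb hr hal hV gm gp cgm cgp #|c| c finset.set0 erefl dm dp.
rewrite !mixE -ex.
by case.
Qed.
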